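(* Let $\bar f:[a,b]\to\mathbb{R}_\mathcal{I}$, $\bar f(x)=[f_l(x),f_r(x)]$. Then $\bar f$ is continuous on $[a,b]$ if and only if $f_l$ and $f_r$ are continuous on $[a,b]$.
   Context: An interval number is a closed interval $\bar a=[a_l,a_r]$ with $a_l<a_r$ real; $\mathbb{R}_\mathcal{I}$ is the set of interval numbers. Write $a_c=(a_l+a_r)/2$, $a_w=(a_r-a_l)/2>0$. Distance: $d(\bar a,\bar b)=\sqrt{(a_c-b_c)^2+(\ln a_w-\ln b_w)^2}$. $\bar f$ is continuous at $x\in[a,b]$ if for every $\varepsilon>0$ there is $\delta>0$ with $d(\bar f(x),\bar f(y))<\varepsilon$ for all $y\in[a,b]$ with $|y-x|<\delta$; continuous on $[a,b]$ if continuous at each point. *)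

(* Defs.v *)
From Stdlib Require Import Reals.
Open Scope R_scope.

Record interval_number : Type := mkI {
  il : R;
  ir : R;
  i_lt : il < ir
}.

Definition ic (A : interval_number) : R := (il A + ir A) / 2.
Definition iw (A : interval_number) : R := (ir A - il A) / 2.

Definition idist (A B : interval_number) : R :=
  sqrt ((ic A - ic B) ^ 2 + (ln (iw A) - ln (iw B)) ^ 2).

(* fbar : [a,b] -> R_I, modelled as a total function of which only the
   values on [a,b] matter. *)
Definition icont_at (a b : R) (F : R -> interval_number) (x : R) : Prop :=
  forall eps, 0 < eps -> exists delta, 0 < delta /\
    forall y, a <= y <= b -> Rabs (y - x) < delta -> idist (F x) (F y) < eps.

Definition icont_on (a b : R) (F : R -> interval_number) : Prop :=
  forall x, a <= x <= b -> icont_at a b F x.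

Definition rcont_at (a b : R) (f : R -> R) (x : R) : Prop :=
  forall eps, 0 < eps -> exists delta, 0 < delta /\
    forall y, a <= y <= b -> Rabs (y - x) < delta -> Rabs (f x - f y) < eps.

Definition rcont_on (a b : R) (f : R -> R) : Prop :=
  forall x, a <= x <= b -> rcont_at a b f x.

(* Main.v *)
Require Import Defs.
From Stdlib Require Import Reals Lra.
Open Scope R_scope.

Lemma rc_ext a b f g x : (forall t, f t = g t) -> rcont_at a b f x -> rcont_at a b g x.
Proof.
  intros H C e He. destruct (C e He) as [d [Hd Hy]]. exists d. split; auto.
  intros y Hy1 Hy2. rewrite <- !H. auto.
Qed.

Lemma rc_lin a b f g x (p q : R) : rcont_at a b f x -> rcont_at a b g x ->
  rcont_at a b (fun t => p * f t + q * g t) x.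
Proof.
  intros Cf Cg e He.
  set (e' := e / (2 * (Rabs p + Rabs q + 1))).
  assert (He' : 0 < e').
  { unfold e'. apply Rdiv_lt_0_compat; auto. pose proof (Rabs_pos p); pose proof (Rabs_pos q); lra. }
  destruct (Cf e' He') as [d1 [Hd1 H1]]. destruct (Cg e' He') as [d2 [Hd2 H2]].
  exists (Rmin d1 d2). split. apply Rmin_pos; auto.
  intros y Hy Hyx.
  assert (A1 := H1 y Hy (Rlt_le_trans _ _ _ Hyx (Rmin_l _ _))).
  assert (A2 := H2 y Hy (Rlt_le_trans _ _ _ Hyx (Rmin_r _ _))).
  replace (p * f x + q * g x - (p * f y + q * g y)) with (p * (f x - f y) + q * (g x - g y)) by ring.
  eapply Rle_lt_trans. apply Rabs_triang. rewrite !Rabs_mult.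
  assert (P1 : Rabs p * Rabs (f x - f y) <= Rabs p * e') by (apply Rmult_le_compat_l; [apply Rabs_pos|lra]).
  assert (P2 : Rabs q * Rabs (g x - g y) <= Rabs q * e') by (apply Rmult_le_compat_l; [apply Rabs_pos|lra]).
  assert (E : (Rabs p + Rabs q + 1) * e' = e / 2).
  { unfold e'. field. pose proof (Rabs_pos p); pose proof (Rabs_pos q); lra. }
  nra.
Qed.

Lemma rc_comp a b (g : R -> R) D f x : continue_in g D (f x) -> (forall t, D (f t)) ->
  rcont_at a b f x -> rcont_at a b (fun t => g (f t)) x.
Proof.
  intros Cg HD Cf e He.
  destruct (Cg e He) as [al [Hal Hg]].
  destruct (Cf al Hal) as [d [Hd Hf]].
  exists d. split; auto. intros y Hy Hyx.
  destruct (Req_dec (f y) (f x)) as [E|E].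
  - rewrite E. rewrite Rminus_diag, Rabs_R0. auto.
  - rewrite Rabs_minus_sym. apply (Hg (f y)). split.
    + split; auto.
    + simpl. unfold R_dist. rewrite Rabs_minus_sym. auto.
Qed.

Lemma sq_le u v : Rabs u <= sqrt (u ^ 2 + v ^ 2).
Proof.
  rewrite <- sqrt_Rsqr_abs. apply sqrt_le_1_alt. unfold Rsqr. nra.
Qed.

Lemma sq_le2 u v : sqrt (u ^ 2 + v ^ 2) <= Rabs u + Rabs v.
Proof.
  rewrite <- (sqrt_Rsqr (Rabs u + Rabs v)) by (pose proof (Rabs_pos u); pose proof (Rabs_pos v); lra).
  apply sqrt_le_1_alt. unfold Rsqr.
  rewrite <- (pow2_abs u), <- (pow2_abs v).
  pose proof (Rabs_pos u); pose proof (Rabs_pos v). nra.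
Qed.

Lemma iw_pos A : 0 < iw A.
Proof. unfold iw. pose proof (i_lt A). lra. Qed.

Theorem theorem3p5 (a b : R) (F : R -> interval_number) :
  icont_on a b F <->
  (rcont_on a b (fun x => il (F x)) /\ rcont_on a b (fun x => ir (F x))).
Proof.
  split.
  - intros C.
    assert (Hc : forall x, a <= x <= b -> rcont_at a b (fun t => ic (F t)) x).
    { intros x Hx e He. destruct (C x Hx e He) as [d [Hd H]]. exists d. split; auto.
      intros y Hy Hyx. eapply Rle_lt_trans. apply sq_le. apply H; auto. }
    assert (Hl : forall x, a <= x <= b -> rcont_at a b (fun t => ln (iw (F t))) x).
    { intros x Hx e He. destruct (C x Hx e He) as [d [Hd H]]. exists d. split; auto.
      intros y Hy Hyx. eapply Rle_lt_trans; [| apply H; auto]. unfold idist. rewrite (Rplus_comm ((ic _ - _) ^ 2)). apply sq_le. all: auto. }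
    assert (Hw : forall x, a <= x <= b -> rcont_at a b (fun t => iw (F t)) x).
    { intros x Hx. apply rc_ext with (fun t => exp (ln (iw (F t)))).
      { intros t. apply exp_ln, iw_pos. }
      apply (rc_comp a b exp (fun _ => True)); auto.
      apply derivable_continuous_pt, derivable_pt_exp. }
    split; intros x Hx.
    + apply rc_ext with (fun t => 1 * ic (F t) + (-1) * iw (F t)).
      { intros t. unfold ic, iw. field. }
      apply rc_lin; auto.
    + apply rc_ext with (fun t => 1 * ic (F t) + 1 * iw (F t)).
      { intros t. unfold ic, iw. field. }
      apply rc_lin; auto.
  - intros [Cl Cr] x Hx.
    assert (Hc : rcont_at a b (fun t => ic (F t)) x).
    { apply rc_ext with (fun t => /2 * il (F t) + /2 * ir (F t)).
      { intros t. unfold ic. field. }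
      apply rc_lin; auto. }
    assert (Hw : rcont_at a b (fun t => iw (F t)) x).
    { apply rc_ext with (fun t => (-/2) * il (F t) + /2 * ir (F t)).
      { intros t. unfold iw. field. }
      apply rc_lin; auto. }
    assert (Hl : rcont_at a b (fun t => ln (iw (F t))) x).
    { apply (rc_comp a b ln (fun y => 0 < y)); auto.
      apply ln_continue, iw_pos. intros t. apply iw_pos. }
    intros e He.
    destruct (Hc (e/2) ltac:(lra)) as [d1 [Hd1 H1]].
    destruct (Hl (e/2) ltac:(lra)) as [d2 [Hd2 H2]].
    exists (Rmin d1 d2). split. apply Rmin_pos; auto.
    intros y Hy Hyx.
    assert (A1 := H1 y Hy (Rlt_le_trans _ _ _ Hyx (Rmin_l _ _))).
    assert (A2 := H2 y Hy (Rlt_le_trans _ _ _ Hyx (Rmin_r _ _))).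
    unfold idist. eapply Rle_lt_trans. apply sq_le2. simpl in A1, A2. lra.
Qed.
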